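(* For any fixed $0\le\lambda_1\le\lambda_2\le1$, the quantity $\Gamma_n\big((\theta^*_n)_{\lambda_1,\lambda_2}\big)$ is non-increasing in $n\ge2$.
   Context: A threshold function is a non-increasing map $\theta:[0,1]\to[0,1]$. For $0\le\lambda_1\le\lambda_2\le1$, $\theta_{\lambda_1,\lambda_2}(t)=1$ for $t\in[0,\lambda_1]$, $=\theta(t)$ for $t\in(\lambda_1,\lambda_2)$, $=0$ for $t\in[\lambda_2,1]$. $\Gamma_n(\theta)=\int_0^1\Big(\int_s^1\frac{(1-t+t\theta(s))^n-t\theta(s)^n}{t(1-t)}\,\mathrm dt-\theta(s)^n\Big)\mathrm ds$. For $s\in[0,1)$, $\theta^*_n(s)$ is the unique solution in $(0,1)$ of $\int_s^1\frac{(1-t+t\theta^*_n(s))^{n-1}-\theta^*_n(s)^{n-1}}{1-t}\,\mathrm dt=\theta^*_n(s)^{n-1}$, and $\theta^*_n(1)=0$. *)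

(* Defs.v *)
From HB Require Import structures.
From mathcomp Require Import all_boot all_order all_algebra.
From mathcomp Require Import all_classical all_reals all_analysis.
Set Implicit Arguments. Unset Strict Implicit. Unset Printing Implicit Defensive.
Import Order.TTheory GRing.Theory Num.Theory.
Import numFieldNormedType.Exports.
Local Open Scope classical_set_scope.
Local Open Scope ring_scope.

Section Defs.
Variable R : realType.
Local Notation mu := (@lebesgue_measure R).

Definition trunc (l1 l2 : R) (theta : R -> R) (t : R) : R :=
  if t <= l1 then 1 else if t < l2 then theta t else 0.

Definition Gamma_inner (n : nat) (th s : R) : \bar R :=
  (\int[mu]_(t in `[s, 1%R]) (((1 - t + t * th) ^+ n - t * th ^+ n)
                             / (t * (1 - t)))%:E)%E.

Definition Gamma (n : nat) (theta : R -> R) : \bar R :=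
  (\int[mu]_(s in `[0%R, 1%R]) (Gamma_inner n (theta s) s - (theta s ^+ n)%:E))%E.

Definition theta_star_eq (n : nat) (s x : R) : Prop :=
  (\int[mu]_(t in `[s, 1%R]) (((1 - t + t * x) ^+ n.-1 - x ^+ n.-1) / (1 - t))%:E
     = (x ^+ n.-1)%:E)%E.

(* theta*_n(s): the (unique) solution in (0,1) for s in [0,1); 0 at s = 1 *)
Definition theta_star (n : nat) (s : R) : R :=
  if s < 1 then xget 0 [set x | 0 < x < 1 /\ theta_star_eq n s x] else 0.

End Defs.

(* Main.v *)
Require Import Defs.
From mathcomp Require Import all_boot all_order all_algebra.
From mathcomp Require Import all_classical all_reals all_analysis.
From mathcomp Require Import ring lra measurable_realfun.
Import Order.TTheory GRing.Theory Num.Theory.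
Import numFieldNormedType.Exports.


Section Alg.
Local Open Scope classical_set_scope.
Local Open Scope ring_scope.
Variable R : realType.
Implicit Types x y t : R.

Definition phi n (x t : R) := ((1 - t + t * x) ^+ n - t * x ^+ n) / (t * (1 - t)).
Definition psi k (x t : R) := ((1 - t + t * x) ^+ k - x ^+ k) / (1 - t).

Lemma ax_ge x t : 0 <= x <= 1 -> 0 <= t <= 1 -> x <= 1 - t + t * x.
Proof. move=> /andP[? ?] /andP[? ?]; nra. Qed.

Lemma phi_ge0 n x t : 0 <= x <= 1 -> 0 < t < 1 -> 0 <= phi n x t.
Proof.
move=> hx ht; have ht' : 0 <= t <= 1 by case/andP: ht => ? ?; apply/andP; split; lra.
have hax := ax_ge x t hx ht'.
case/andP: hx => x0 x1; case/andP: ht => t0 t1.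
apply: divr_ge0; last by nra.
rewrite subr_ge0; apply: (@le_trans _ _ (x ^+ n)).
  by rewrite -[X in _ <= X]mul1r ler_wpM2r ?exprn_ge0 //; lra.
by apply: lerXn2r => //; rewrite nnegrE //; lra.
Qed.

Lemma psi_ge0 n x t : 0 <= x <= 1 -> 0 < t < 1 -> 0 <= psi n x t.
Proof.
move=> hx ht; have ht' : 0 <= t <= 1 by case/andP: ht => ? ?; apply/andP; split; lra.
have hax := ax_ge x t hx ht'.
case/andP: hx => x0 x1; case/andP: ht => t0 t1.
apply: divr_ge0; last by lra.
by rewrite subr_ge0; apply: lerXn2r => //; rewrite nnegrE //; lra.
Qed.

Lemma phi_step k x t : 0 < t < 1 ->
  phi k x t = phi k.+1 x t + (1 - x) * psi k x t.
Proof.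
case/andP=> t0 t1; rewrite /phi /psi !exprS.
have ? : t != 0 by rewrite gt_eqF.
have ? : 1 - t != 0 by rewrite gt_eqF // subr_gt0.
by field; apply/andP; split.
Qed.

Lemma core_ineq n x y t : 0 < x <= 1 -> 0 <= y <= 1 -> 0 < t < 1 ->
  (1 - t + t * y) ^+ n.+1 - (1 - t + t * x) ^+ n.+1 <=
  t * (y ^+ n.+1 - x ^+ n.+1) * ((1 - t + t * x) ^+ n / x ^+ n).
Proof.
move=> /andP[x0 x1] /andP[y0 y1] /andP[t0 t1].
set ay := 1 - t + t * y; set ax := 1 - t + t * x.
set r := ax / x.
have xn0 : x != 0 by rewrite gt_eqF.
have axr : ax = x * r by rewrite /r mulrC divfK.
have ay0 : 0 <= ay by rewrite /ay; nra.
have ax0 : 0 <= ax by rewrite /ax; nra.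
have r0 : 0 <= r by rewrite /r divr_ge0 // /ax; nra.
have yr0 : 0 <= y * r by rewrite mulr_ge0.
have yr : y * r - ay = (1 - t) * (y - x) / x.
  by rewrite /r /ay /ax; field.
rewrite -expr_div_n -/r.
rewrite !subrXX.
have -> : ay - ax = t * (y - x) by rewrite /ay /ax; ring.
rewrite -!mulrA ler_wpM2l ?(ltW t0) //.
rewrite mulr_suml.
have [yx|yx] := leP x y.
  rewrite ler_wpM2l ?subr_ge0 //.
  apply: ler_sum => i _.
  have hi : (i <= n)%N by rewrite -ltnS.
  rewrite (_ : r ^+ n = r ^+ (n - i) * r ^+ i); last by rewrite -exprD subnK.
  rewrite [n.+1.-1]/= mulrACA -!exprMn -axr.
  rewrite ler_wpM2r ?exprn_ge0 //.
  apply: lerXn2r; rewrite ?nnegrE //.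
  rewrite -subr_ge0 yr; apply: divr_ge0; [apply: mulr_ge0|]; lra.
rewrite ler_wnM2l ?subr_le0 ?(ltW yx) //.
apply: ler_sum => i _.
have hi : (i <= n)%N by rewrite -ltnS.
rewrite (_ : r ^+ n = r ^+ (n - i) * r ^+ i); last by rewrite -exprD subnK.
rewrite [n.+1.-1]/= mulrACA -!exprMn -axr.
rewrite ler_wpM2r ?exprn_ge0 //.
apply: lerXn2r; rewrite ?nnegrE //.
rewrite -subr_le0 yr; apply: mulr_le0_ge0; [apply: mulr_ge0_le0|]; try lra.
by rewrite invr_ge0; lra.
Qed.

Lemma phi_K2 n x y t : 0 < x <= 1 -> 0 <= y <= 1 -> 0 < t < 1 ->
  phi n.+1 y t <= phi n.+1 x t + (y ^+ n.+1 - x ^+ n.+1) / x ^+ n * psi n x t.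
Proof.
move=> hx hy ht; have C := core_ineq n x y t hx hy ht.
case/andP: hx => x0 x1; case/andP: ht => t0 t1.
have ? : t != 0 by rewrite gt_eqF.
have ? : 1 - t != 0 by rewrite gt_eqF // subr_gt0.
have ? : x ^+ n != 0 by rewrite expf_neq0 // gt_eqF.
rewrite -subr_ge0.
set ay := 1 - t + t * y; set ax := 1 - t + t * x.
have -> : phi n.+1 x t + (y ^+ n.+1 - x ^+ n.+1) / x ^+ n * psi n x t - phi n.+1 y t
  = (t * (y ^+ n.+1 - x ^+ n.+1) * (ax ^+ n / x ^+ n) - (ay ^+ n.+1 - ax ^+ n.+1))
     / (t * (1 - t)).
  rewrite /phi /psi -/ax -/ay; field.
  by apply/and3P; split.
by apply: divr_ge0; [rewrite subr_ge0|nra].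
Qed.

End Alg.
Arguments phi {R}. Arguments psi {R}.
Arguments phi_ge0 {R}. Arguments psi_ge0 {R}. Arguments phi_step {R}.
Arguments phi_K2 {R}.


Section Int.
Local Open Scope classical_set_scope.
Local Open Scope ring_scope.
Variable R : realType.
Local Notation mu := (@lebesgue_measure R).

Lemma meas_ratio (p q : {poly R}) (s : R) : 0 <= s ->
  (forall t, s < t < 1 -> q.[t] != 0) ->
  measurable_fun `]s, 1[ (fun t => (p.[t] / q.[t])%:E).
Proof.
move=> s0 hq; apply/measurable_EFinP.
apply: open_continuous_measurable_fun; first exact: interval_open.
move=> t; rewrite inE /= in_itv /= => ht.
apply: continuousM; first exact: continuous_horner.
by apply: continuousV; [exact: hq|exact: continuous_horner].
Qed.

Lemma phiE n (x : R) : phi n x = fun t : R =>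
  ((1 - 'X + 'X * x%:P) ^+ n - 'X * (x ^+ n)%:P).[t] / ('X * (1 - 'X)).[t].
Proof. by apply/funext => t; rewrite /phi !hornerE. Qed.

Lemma psiE n (x : R) : psi n x = fun t : R =>
  ((1 - 'X + 'X * x%:P) ^+ n - (x ^+ n)%:P).[t] / (1 - 'X).[t].
Proof. by apply/funext => t; rewrite /psi !hornerE. Qed.

Lemma mphi n (x s : R) : 0 <= s -> measurable_fun `]s, 1[ (fun t => (phi n x t)%:E).
Proof.
move=> s0; rewrite phiE; apply: meas_ratio => // t /andP[st t1].
rewrite !hornerE mulf_neq0 // ?gt_eqF //; lra.
Qed.

Lemma mpsi n (x s : R) : 0 <= s -> measurable_fun `]s, 1[ (fun t => (psi n x t)%:E).
Proof.
move=> s0; rewrite psiE; apply: meas_ratio => // t /andP[st t1].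
rewrite !hornerE gt_eqF //; lra.
Qed.

End Int.


Section Int2.
Local Open Scope classical_set_scope.
Local Open Scope ring_scope.
Variable R : realType.
Local Notation mu := (@lebesgue_measure R).

Lemma GiE n (x s : R) : 0 <= s ->
  Gamma_inner n x s = (\int[mu]_(t in `]s, 1%R[) (phi n x t)%:E)%E.
Proof.
move=> s0; rewrite /Gamma_inner.
by rewrite (@integral_itv_bndoo _ s 1 (fun t => (phi n x t)%:E) true false) //; exact: mphi.
Qed.

Lemma TSE n (x s : R) : 0 <= s ->
  theta_star_eq n s x <->
  (\int[mu]_(t in `]s, 1%R[) (psi n.-1 x t)%:E)%E = (x ^+ n.-1)%:E.
Proof.
move=> s0; rewrite /theta_star_eq.
by rewrite (@integral_itv_bndoo _ s 1 (fun t => (psi n.-1 x t)%:E) true false) //; exact: mpsi.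
Qed.

Lemma in01 (s t : R) : 0 <= s -> `]s, 1[%classic t -> 0 < t < 1.
Proof. by move=> s0; rewrite /= in_itv /= => /andP[? ?]; apply/andP; split => //; lra. Qed.

Lemma eK1 (I Y : \bar R) (a b c : R) : (0 <= I)%E -> (a%:E <= Y)%E -> b = c - a ->
  (I - b%:E <= (I + Y) - c%:E)%E.
Proof.
move: I Y => [r| |] [y| |] //= I0 aY ->; rewrite ?lee_fin in aY *.
  lra.
by rewrite addey // addye // leey.
Qed.

Lemma eK2a (I J : \bar R) (a b : R) : (0 <= I)%E -> (I <= J + (a - b)%:E)%E ->
  (I - a%:E <= J - b%:E)%E.
Proof.
move: I J => [r| |] [y| |] //= I0; rewrite ?lee_fin.
  lra.
by move=> _; rewrite addye // leey.
Qed.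

Lemma eK2b (I J : \bar R) (a b : R) : (0 <= I)%E -> (I + (b - a)%:E <= J)%E ->
  (I - a%:E <= J - b%:E)%E.
Proof.
move: I J => [r| |] [y| |] //= I0; rewrite ?lee_fin.
  lra.
by move=> _; rewrite addye // leey.
Qed.

End Int2.
Arguments in01 {R s t}.
Arguments GiE {R}. Arguments TSE {R}.


Section K.
Local Open Scope classical_set_scope.
Local Open Scope ring_scope.
Variable R : realType.
Local Notation mu := (@lebesgue_measure R).

Lemma K1 k (x s : R) : 0 <= s -> 0 <= x <= 1 ->
  (((1 - x) * x ^+ k)%:E <= (1 - x)%:E * \int[mu]_(t in `]s, 1%R[) (psi k x t)%:E)%E ->
  (Gamma_inner k.+1 x s - (x ^+ k.+1)%:E <= Gamma_inner k x s - (x ^+ k)%:E)%E.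
Proof.
move=> s0 hx H; rewrite !GiE //.
have x1 : 0 <= 1 - x by case/andP: hx => ? ?; lra.
have -> : (\int[mu]_(t in `]s, 1%R[) (phi k x t)%:E =
    \int[mu]_(t in `]s, 1%R[) (phi k.+1 x t)%:E +
    (1 - x)%:E * \int[mu]_(t in `]s, 1%R[) (psi k x t)%:E)%E.
  rewrite -ge0_integralZl_EFin //; last exact: mpsi.
    rewrite -ge0_integralD //.
    - apply: eq_integral => t; rewrite inE => ht.
      by rewrite (phi_step k x t (in01 s0 ht)) EFinD EFinM.
    - by move=> t ht; rewrite lee_fin; apply: phi_ge0 => //; exact: in01 ht.
    - exact: mphi.
    - move=> t ht; rewrite -EFinM lee_fin mulr_ge0 //.
      by apply: psi_ge0 => //; exact: in01 ht.
    - by apply: measurable_funeM; exact: mpsi.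
  by move=> t ht; rewrite lee_fin; apply: psi_ge0 => //; exact: in01 ht.
apply: eK1 H _.
  by apply: integral_ge0 => t ht; rewrite lee_fin; apply: phi_ge0 => //; exact: in01 ht.
by rewrite exprS; ring.
Qed.

Lemma K2 n (x y s : R) : 0 <= s -> 0 < x <= 1 -> 0 <= y <= 1 ->
  (\int[mu]_(t in `]s, 1%R[) (psi n x t)%:E)%E = (x ^+ n)%:E ->
  (Gamma_inner n.+1 y s - (y ^+ n.+1)%:E <= Gamma_inner n.+1 x s - (x ^+ n.+1)%:E)%E.
Proof.
move=> s0 hx hy H; rewrite !GiE //.
have hx' : 0 <= x <= 1 by case/andP: hx => ? ?; apply/andP; split => //; lra.
have xn0 : x ^+ n != 0 by rewrite expf_neq0 // gt_eqF //; case/andP: hx.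
set c := (y ^+ n.+1 - x ^+ n.+1) / x ^+ n.
have cx : c * x ^+ n = y ^+ n.+1 - x ^+ n.+1 by rewrite /c divfK.
have phy0 t : `]s, 1[%classic t -> (0 <= (phi n.+1 y t)%:E)%E.
  by move=> ht; rewrite lee_fin; apply: phi_ge0 => //; exact: in01 ht.
have phx0 t : `]s, 1[%classic t -> (0 <= (phi n.+1 x t)%:E)%E.
  by move=> ht; rewrite lee_fin; apply: phi_ge0 => //; exact: in01 ht.
have psx0 t : `]s, 1[%classic t -> (0 <= (psi n x t)%:E)%E.
  by move=> ht; rewrite lee_fin; apply: psi_ge0 => //; exact: in01 ht.
have [c0|c0] := leP 0 c.
- apply: eK2a; first exact: integral_ge0.
  have E : (\int[mu]_(t in `]s, 1%R[) ((phi n.+1 x t)%:E + c%:E * (psi n x t)%:E) =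
      \int[mu]_(t in `]s, 1%R[) (phi n.+1 x t)%:E + (y ^+ n.+1 - x ^+ n.+1)%:E)%E.
    rewrite ge0_integralD //; first last.
    - by apply: measurable_funeM; exact: mpsi.
    - by move=> t ht; rewrite -EFinM lee_fin mulr_ge0 // -lee_fin psx0.
    - exact: mphi.
    by rewrite ge0_integralZl_EFin // ?H -?EFinM ?cx //; exact: mpsi.
  rewrite -E; apply: ge0_le_integral => //.
  + exact: mphi.
  + by apply: emeasurable_funD; [exact: mphi|apply: measurable_funeM; exact: mpsi].
  + move=> t ht; rewrite -EFinM -EFinD lee_fin.
    by apply: phi_K2 => //; exact: in01 ht.
- apply: eK2b; first exact: integral_ge0.
  have E : (\int[mu]_(t in `]s, 1%R[) ((phi n.+1 y t)%:E + (- c)%:E * (psi n x t)%:E) =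
      \int[mu]_(t in `]s, 1%R[) (phi n.+1 y t)%:E + (x ^+ n.+1 - y ^+ n.+1)%:E)%E.
    rewrite ge0_integralD //; first last.
    - by apply: measurable_funeM; exact: mpsi.
    - by move=> t ht; rewrite -EFinM lee_fin mulr_ge0 // ?oppr_ge0 ?(ltW c0) // -lee_fin psx0.
    - exact: mphi.
    rewrite ge0_integralZl_EFin // ?H -?EFinM; last by rewrite oppr_ge0 ltW.
      by rewrite mulNr cx opprB.
    exact: mpsi.
  rewrite -E; apply: ge0_le_integral => //.
  + move=> t ht; rewrite -EFinM -EFinD lee_fin; apply: addr_ge0.
      by rewrite -lee_fin phy0.
    by apply: mulr_ge0; [rewrite oppr_ge0 ltW|rewrite -lee_fin psx0].
  + by apply: emeasurable_funD; [exact: mphi|apply: measurable_funeM; exact: mpsi].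
  + exact: mphi.
  + move=> t ht; rewrite -EFinM -EFinD lee_fin.
    have := phi_K2 n x y t hx hy (in01 s0 ht); rewrite -/c mulNr; lra.
Qed.

End K.
Arguments K1 {R}. Arguments K2 {R}.


Section E.
Local Open Scope classical_set_scope.
Local Open Scope ring_scope.
Variable R : realType.
Local Notation mu := (@lebesgue_measure R).

Definition coef k i (x : R) := (x ^+ (k - i.+1) * (1 - x) ^+ i.+1) *+ 'C(k, i.+1).

Lemma coef_ge0 k i (x : R) : 0 <= x <= 1 -> 0 <= coef k i x.
Proof.
case/andP=> x0 x1; rewrite /coef mulrn_wge0 // mulr_ge0 ?exprn_ge0 //; lra.
Qed.

Lemma psi_exp k (x t : R) : t < 1 ->
  psi k x t = \sum_(i < k) coef k i x * (1 - t) ^+ i.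
Proof.
move=> t1; rewrite /psi.
have -> : 1 - t + t * x = x + (1 - x) * (1 - t) by ring.
rewrite exprDn big_ord_recl /= subn0 expr0 mulr1 bin0 mulr1n addrAC subrr add0r.
rewrite mulr_suml; apply: eq_bigr => i _.
have ? : 1 - t != 0 by rewrite gt_eqF // subr_gt0.
rewrite /coef /bump leq0n add1n exprMn (exprSr (1 - t) i).
move: (x ^+ (k - i.+1)) ((1 - x) ^+ i.+1) ((1 - t) ^+ i) ('C(k, i.+1)) => a b c C.
have -> : a * (b * (c * (1 - t))) = (a * b * c) * (1 - t) by ring.
by rewrite -[in LHS]mulrnAl mulfK // mulrnAl.
Qed.

Lemma mpow i (s : R) : measurable_fun `]s, 1[ (fun t : R => ((1 - t) ^+ i)%:E).
Proof.
apply/measurable_EFinP; apply: measurable_funX; apply: measurable_funB.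
  exact: measurable_cst.
exact: measurable_id.
Qed.

Definition cc (s : R) i := fine (\int[mu]_(t in `]s, 1%R[) ((1 - t) ^+ i)%:E)%E.

Lemma ccE (s : R) i : 0 <= s ->
  (\int[mu]_(t in `]s, 1%R[) ((1 - t) ^+ i)%:E)%E = (cc s i)%:E.
Proof.
move=> s0; rewrite /cc fineK // ge0_fin_numE; last first.
  apply: integral_ge0 => t; rewrite /= in_itv /= => /andP[_ t1].
  by rewrite lee_fin exprn_ge0 //; lra.
apply: (@le_lt_trans _ _ (\int[mu]_(t in `]s, 1%R[) (cst 1%:E) t)%E).
  apply: ge0_le_integral => //.
  - move=> t; rewrite /= in_itv /= => /andP[_ t1].
    by rewrite lee_fin exprn_ge0 //; lra.
  - exact: mpow.
  - move=> t; rewrite /= in_itv /= => /andP[st t1].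
    rewrite lee_fin exprn_ile1 //; lra.
rewrite integral_cst //= mul1e lebesgue_measure_itv /=.
by case: ifP => _; rewrite ?ltey.
Qed.

End E.
Arguments coef {R}. Arguments cc {R}. Arguments ccE {R}. Arguments coef_ge0 {R}.
Arguments psi_exp {R}. Arguments mpow {R}.


Section F.
Local Open Scope classical_set_scope.
Local Open Scope ring_scope.
Variable R : realType.
Local Notation mu := (@lebesgue_measure R).

Definition Pp k (s : R) : {poly R} :=
  \sum_(i < k) (('X ^+ (k - i.+1) * (1 - 'X) ^+ i.+1) *+ 'C(k, i.+1)) * (cc s i)%:P.

Lemma PpE k (s x : R) : (Pp k s).[x] = \sum_(i < k) coef k i x * cc s i.
Proof.
rewrite /Pp horner_sum; apply: eq_bigr => i _.
by rewrite /coef !hornerE hornerMn !hornerE.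
Qed.

Lemma int_psi k (s x : R) : 0 <= s -> 0 <= x <= 1 ->
  (\int[mu]_(t in `]s, 1%R[) (psi k x t)%:E)%E = ((Pp k s).[x])%:E.
Proof.
move=> s0 hx; rewrite PpE -sumEFin.
transitivity (\int[mu]_(t in `]s, 1%R[)
   (\sum_(i < k) (coef k i x)%:E * ((1 - t) ^+ i)%:E))%E.
  apply: eq_integral => t; rewrite inE /= in_itv /= => /andP[_ t1].
  by rewrite psi_exp // -sumEFin; apply: eq_bigr => i _; rewrite EFinM.
rewrite ge0_integral_sum //.
- apply: eq_bigr => i _.
  rewrite ge0_integralZl_EFin //; first by rewrite ccE // EFinM.
  + move=> t; rewrite /= in_itv /= => /andP[_ t1].
    by rewrite lee_fin exprn_ge0 //; lra.
  + exact: mpow.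
  + exact: coef_ge0.
- by move=> i; apply: measurable_funeM; exact: mpow.
- move=> i t; rewrite /= in_itv /= => /andP[_ t1].
  by rewrite -EFinM lee_fin mulr_ge0 ?coef_ge0 // exprn_ge0 //; lra.
Qed.

Lemma psi0_pos k (s : R) : (0 < k)%N -> 0 <= s < 1 ->
  (0 < \int[mu]_(t in `]s, 1%R[) (psi k 0 t)%:E)%E.
Proof.
move=> k0 /andP[s0 s1].
set d := (1 - s) / 2.
have d0 : 0 < d by rewrite /d; lra.
set m := s + d.
have sm : s < m by rewrite /m; lra.
apply: (@lt_le_trans _ _ (\int[mu]_(t in `]s, 1%R[)
   ((d ^+ k.-1)%:E * (\1_(`]s, m[) t)%:E))%E).
  rewrite ge0_integralZl_EFin //.
  - rewrite integral_indic //.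
    rewrite setIidl; last first.
      move=> t; rewrite /= !in_itv /= => /andP[h1 h2]; apply/andP; split => //.
      rewrite /m /d in h2; lra.
    rewrite [X in (_ * X)%E](_ : _ = (m - s)%:E); last first.
      by have := @lebesgue_measure_itv R `]s, m[; rewrite /= lte_fin sm -EFinB; apply.
    rewrite -EFinM lte_fin.
    by rewrite mulr_gt0 ?exprn_gt0 // subr_gt0.
  - by apply/measurable_EFinP; apply: measurable_indic; exact: measurable_itv.
  - by rewrite exprn_ge0 // ltW.
apply: ge0_le_integral => //.
- move=> t _; rewrite -EFinM lee_fin mulr_ge0 ?exprn_ge0 ?(ltW d0) //.
- apply: measurable_funeM; apply/measurable_EFinP; apply: measurable_indic.
  exact: measurable_itv.
- exact: mpsi.
- move=> t; rewrite /= in_itv /= => /andP[st t1].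
  rewrite -EFinM lee_fin indicE.
  case: (boolP (t \in `]s, m[%classic)) => htm; last first.
    rewrite mulr0; apply: psi_ge0; [by rewrite lexx ler01|apply/andP; split; lra].
  rewrite mulr1 /psi mulr0 addr0 expr0n eqn0Ngt k0 /= subr0.
  have ? : 1 - t != 0 by rewrite gt_eqF // subr_gt0.
  rewrite -[in (1 - t) ^+ k](prednK k0) exprS [_ * _ ^+ _]mulrC mulfK //.
  apply: lerXn2r; rewrite ?nnegrE; try lra.
  have dE : 2 * d = 1 - s by rewrite /d; field.
  by move: htm; rewrite inE /= in_itv /= /m => /andP[_ h]; lra.
Qed.

Lemma psi1_int k (s : R) : (\int[mu]_(t in `]s, 1%R[) (psi k 1 t)%:E)%E = 0%E.
Proof.
rewrite (eq_integral (fun=> 0%E)); first exact: integral0.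
by move=> t _; rewrite /psi mulr1 subrK expr1n subrr mul0r.
Qed.

Lemma exists_root n (s : R) : (2 <= n)%N -> 0 <= s < 1 ->
  exists x, 0 < x < 1 /\ theta_star_eq n s x.
Proof.
move=> n2 /andP[s0 s1].
have k0 : (0 < n.-1)%N by rewrite -ltnS prednK // ltnW.
set k := n.-1 in k0 *.
set G := fun x => (Pp k s).[x] - x ^+ k.
have G0 : 0 < G 0.
  rewrite /G expr0n eqn0Ngt k0 /= subr0 -lte_fin -int_psi //; last by rewrite lexx ler01.
  by apply: psi0_pos => //; rewrite s0 s1.
have G1 : G 1 = -1.
  rewrite /G expr1n.
  have := int_psi k s 1 s0; rewrite psi1_int lexx ler01 => /(_ isT) [<-].
  by rewrite sub0r.
have [c hc Gc] : exists2 c, c \in `[0, 1] & G c = 0.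
  apply: IVT; first exact: ler01.
    apply: continuous_subspaceT => x; apply: continuousB.
      exact: continuous_horner.
    exact: exprn_continuous.
  rewrite G1; apply/andP; split.
    by rewrite ge_min; apply/orP; right; lra.
  by rewrite le_max; apply/orP; left; lra.
move: hc; rewrite in_itv /= => /andP[c0 c1].
have cn0 : c != 0 by apply/eqP => c0'; move: Gc; rewrite c0' => Gc; lra.
have cn1 : c != 1 by apply/eqP => c1'; move: Gc; rewrite c1' G1 => Gc; lra.
exists c; split.
  by apply/andP; split; rewrite lt_neqAle ?c0 ?c1 ?andbT // eq_sym.
apply/TSE => //; rewrite -/k int_psi //; last by rewrite c0 c1.
by congr EFin; move: Gc; rewrite /G => /eqP; rewrite subr_eq0 => /eqP.
Qed.

End F.
Arguments exists_root {R}.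


Section G.
Local Open Scope classical_set_scope.
Local Open Scope ring_scope.
Variable R : realType.
Local Notation mu := (@lebesgue_measure R).

Lemma le_int_nm (D : set R) (f g : R -> \bar R) :
  (forall x, D x -> (f x <= g x)%E) ->
  (\int[mu]_(x in D) f x <= \int[mu]_(x in D) g x)%E.
Proof.
move=> fg; have fgD := lee_restrict fg.
rewrite /integral; apply: leeB.
  apply: ereal_sup_le => y [h hf <-]; exists h => //= x.
  apply: (le_trans (hf x)); apply: (@funepos_le _ _ setT); last by rewrite in_setT.
  by move=> z _; exact: fgD.
apply: ereal_sup_le => y [h hf <-]; exists h => //= x.
apply: (le_trans (hf x)); apply: (@funeneg_le _ _ setT); last by rewrite in_setT.
by move=> z _; exact: fgD.
Qed.

Lemma ts_spec n (s : R) : (2 <= n)%N -> 0 <= s < 1 ->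
  0 < theta_star n s < 1 /\ theta_star_eq n s (theta_star n s).
Proof.
move=> n2 hs; have /andP[_ s1] := hs.
rewrite /theta_star s1.
exact: (xgetPex 0 (exists_root n s n2 hs)).
Qed.

Definition hh (l1 l2 : R) k s :=
  (Gamma_inner k (trunc l1 l2 (theta_star k) s) s -
   ((trunc l1 l2 (theta_star k) s) ^+ k)%:E)%E.

Lemma hh_step (l1 l2 : R) k s : l1 <= l2 -> l2 <= 1 -> (2 <= k)%N ->
  0 <= s <= 1 -> (hh l1 l2 k.+1 s <= hh l1 l2 k s)%E.
Proof.
move=> h12 h1 k2 /andP[s0 s1]; rewrite /hh /trunc.
case: ifP => sl1.
  apply: K1 => //; first by rewrite ler01 lexx.
  by rewrite subrr mul0r mul0e.
case: ifP => sl2; last first.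
  apply: K1 => //; first by rewrite lexx ler01.
  rewrite subr0 mul1r mul1e expr0n; case: k k2 => // k _ /=.
  by apply: integral_ge0 => t ht; rewrite lee_fin; apply: psi_ge0;
    [rewrite lexx ler01|exact: in01 ht].
have hs : 0 <= s < 1 by rewrite s0 /=; apply: (lt_le_trans sl2 h1).
have [hx1 E1] := ts_spec k.+1 s (leqW k2) hs.
have [hx0 E0] := ts_spec k s k2 hs.
set x1 := theta_star k.+1 s in hx1 E1 *.
set x0 := theta_star k s in hx0 E0 *.
have hx1' : 0 <= x1 <= 1 by case/andP: hx1 => ? ?; apply/andP; split; lra.
have hx0' : 0 < x0 <= 1 by case/andP: hx0 => ? ?; apply/andP; split; lra.
apply: (le_trans (K1 k x1 s s0 hx1' _)).
  by move/(TSE _ _ _ s0): E1 => /= ->; rewrite -EFinM.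
move/(TSE _ _ _ s0): E0 => E0.
have := K2 k.-1 x0 x1 s s0 hx0' hx1' E0.
by rewrite prednK // ltnW.
Qed.

Lemma Gamma_step (l1 l2 : R) k : l1 <= l2 -> l2 <= 1 -> (2 <= k)%N ->
  (Gamma k.+1 (trunc l1 l2 (theta_star k.+1)) <=
   Gamma k (trunc l1 l2 (theta_star k)))%E.
Proof.
move=> h12 h1 k2; rewrite /Gamma; apply: le_int_nm => s.
rewrite /= in_itv /= => hs.
exact: (hh_step l1 l2 k s h12 h1 k2 hs).
Qed.

End G.


Local Open Scope ring_scope.

Theorem mainTheorem15 (R : realType) (l1 l2 : R)
  (h0 : 0 <= l1) (h12 : l1 <= l2) (h1 : l2 <= 1) (n m : nat)
  (hn : (2 <= n)%N) (hnm : (n <= m)%N) :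
  (Gamma m (trunc l1 l2 (theta_star m)) <=
   Gamma n (trunc l1 l2 (theta_star n)))%E.
Proof.
elim: m hnm => [|m IH] hnm.
  by move: hn; rewrite leqn0 in hnm; rewrite (eqP hnm).
rewrite leq_eqVlt in hnm; case/orP: hnm => [/eqP->|hnm]; first exact: lexx.
rewrite ltnS in hnm.
apply: (le_trans _ (IH hnm)).
exact: (@Gamma_step R l1 l2 m h12 h1 (leq_trans hn hnm)).
Qed.
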